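(* Let $\mathcal D[t]\subset\mathcal H\subset\mathcal D^\times[t^\times]$ be a rigged Hilbert space with $\mathcal D[t]$ a reflexive Fréchet space, $(X,\mu)$ a $\sigma$-finite measure space, $\omega,\theta$ Bessel distribution maps and $m\in L^\infty(X,\mu)$. Suppose the outer multiplier $\mathcal M_{m,\omega,\theta}:\mathcal D\to\mathcal D^\times$ is bijective with continuous inverse $\mathcal D^\times[t^\times]\to\mathcal D[t]$. Then (i) $M_{m,\omega,\theta}:D(M_{m,\omega,\theta})\to\mathcal H$ is bijective, densely defined in $\mathcal H$, and has a bounded inverse (in particular it is closed); (ii) $(M_{m,\omega,\theta})^*=M_{\overline m,\theta,\omega}$.
   Context: Rigged Hilbert space: $\mathcal D$ dense subspace of Hilbert space $\mathcal H$ with a locally convex topology $t$ finer than the norm topology, $\mathcal D^\times$ its conjugate dual with strong dual topology, $\mathcal H\subset\mathcal D^\times$ (continuous dense inclusions), pairing $\langle F,f\rangle$ extending the inner product, $\langle f,F\rangle:=\overline{\langle F,f\rangle}$. $\omega:X\to\mathcal D^\times$ is a Bessel distribution map if $x\mapsto\langle f,\omega_x\rangle$ is measurable and $\int_X|\langle f,\omega_x\rangle|^2d\mu<\infty$ for all $f\in\mathcal D$. Outer distribution multiplier: $\mathcal M_{m,\omega,\theta}$ is the continuous linear map $\mathcal D\to\mathcal D^\times$ with $\langle\mathcal M_{m,\omega,\theta}f,g\rangle=\int_X m(x)\langle f,\omega_x\rangle\langle\theta_x,g\rangle d\mu$ for $f,g\in\mathcal D$. Distribution multiplier $M_{m,\omega,\theta}$: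 domain is the set of $f\in\mathcal D$ for which $g\mapsto\int_X m(x)\langle f,\omega_x\rangle\langle\theta_x,g\rangle d\mu$ ($g\in\mathcal D$) is defined and bounded in the $\mathcal H$-norm, and $M_{m,\omega,\theta}f\in\mathcal H$ is its Riesz representative (equivalently, $D(M_{m,\omega,\theta})=\{f\in\mathcal D:\mathcal M_{m,\omega,\theta}f\in\mathcal H\}$ and $M_{m,\omega,\theta}$ is the restriction of $\mathcal M_{m,\omega,\theta}$). *)

(* Defs.v *)
From mathcomp Require Import all_boot all_algebra all_classical all_reals all_analysis.
From mathcomp Require Export complex.
Import GRing.Theory Num.Theory.

Set Implicit Arguments.
Unset Strict Implicit.
Unset Printing Implicit Defensive.

Local Open Scope classical_set_scope.
Local Open Scope ring_scope.

Section RiggedDefs.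
Variable R : realType.
Local Notation C := (R[i]).

Definition cnorm2 (z : C) : R := complex.Re z ^+ 2 + complex.Im z ^+ 2.
Definition cabs (z : C) : R := Num.sqrt (cnorm2 z).

Section GenericDual.
Variable V : lmodType C.
Variable op : set V -> Prop.   (* the open sets (subsets of S) *)
Variable S : set V.            (* the carrier: a linear subspace of V *)

Definition nbhd_in (x : V) (U : set V) := exists A, op A /\ A x /\ A `<=` U.

Definition bounded_in (B : set V) :=
  B `<=` S /\
  forall U, nbhd_in 0 U ->
    exists2 r : R, 0 < r &
      forall lam : C, r < cabs lam -> forall b, B b -> U (lam^-1 *: b).

Definition conj_linear_on (phi : V -> C) :=
  forall (a : C) x y, S x -> S y -> phi (a *: x + y) = a^* * phi x + phi y.

Definition continuous_on_S (phi : V -> C) :=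
  forall x, S x -> forall e : R, 0 < e ->
    nbhd_in x [set y | S y -> cabs (phi y - phi x) < e].

Definition cdual_of : set (V -> C) :=
  [set phi | conj_linear_on phi /\ continuous_on_S phi /\
             (forall x, ~ S x -> phi x = 0)].

(* the strong dual topology: uniform convergence on bounded subsets *)
Definition strong_open (A : set (V -> C)) : Prop :=
  A `<=` cdual_of /\
  forall F, A F -> exists B, bounded_in B /\
    exists2 e : R, 0 < e &
      forall G, cdual_of G -> (forall b, B b -> cabs (G b - F b) < e) -> A G.
End GenericDual.

Section OnD.
Variable D : tvsType C.

Definition Dx : set (D -> C) := cdual_of (@open D) setT.
Definition Dx_open : set (D -> C) -> Prop := strong_open (@open D) setT.
Definition Dxx : set ((D -> C) -> C) := cdual_of Dx_open Dx.
Definition Dxx_open : set ((D -> C) -> C) -> Prop := strong_open Dx_open Dx.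

Definition Jcan (f : D) : (D -> C) -> C :=
  fun F => if `[< Dx F >] then (F f)^* else 0.

Definition reflexive_space : Prop :=
  (forall f, Dxx (Jcan f)) /\ injective Jcan /\
  (forall Phi, Dxx Phi -> exists f, Jcan f = Phi) /\
  (forall U : set D, open U <-> Dxx_open (Jcan @` U)).

Definition metrizable_space : Prop :=
  exists dist : D -> D -> R,
    (forall x y, 0 <= dist x y) /\ (forall x y, dist x y = 0 <-> x = y) /\
    (forall x y, dist x y = dist y x) /\
    (forall x y z, dist x z <= dist x y + dist y z) /\
    (forall x (A : set D), nbhs x A <->
       exists2 e : R, 0 < e & [set y | dist x y < e] `<=` A).

Definition frechet_space : Prop :=
  hausdorff_space D /\ metrizable_space /\
  (forall F : set_system D, ProperFilter F -> cauchy F -> exists x : D, F --> x).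
End OnD.
Arguments Dx : clear implicits.
Arguments Dx_open : clear implicits.
Arguments Dxx : clear implicits.
Arguments Dxx_open : clear implicits.

Section Hilbert.
Variable H : lmodType C.
Variable ip : H -> H -> C.     (* linear in the first argument *)

Definition hnorm (x : H) : R := Num.sqrt (complex.Re (ip x x)).

Definition hilbert_space : Prop :=
  (forall (a : C) x y z, ip (a *: x + y) z = a * ip x z + ip y z) /\
  (forall x y, ip y x = (ip x y)^*) /\
  (forall x, 0 <= ip x x) /\ (forall x, ip x x = 0 -> x = 0) /\
  (forall u : nat -> H,
     (forall e : R, 0 < e -> exists N, forall p q, (N <= p)%N -> (N <= q)%N ->
         hnorm (u p - u q) < e) ->
     exists l, forall e : R, 0 < e -> exists N, forall p, (N <= p)%N ->
         hnorm (u p - l) < e).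

(** rigged Hilbert space D[t] ⊂ H ⊂ D^x[t^x]; iota is the inclusion D -> H *)
Variable D : tvsType C.
Variable iota : D -> H.

(* the inclusion H -> D^x : <h, f> = (h | f) *)
Definition jH (h : H) : D -> C := fun f => ip h (iota f).

Definition rigged_hilbert_space : Prop :=
  hilbert_space /\
  (forall (a : C) x y, iota (a *: x + y) = a *: iota x + iota y) /\
  injective iota /\
  (* t finer than the norm topology *)
  (forall x (e : R), 0 < e -> nbhs x [set y | hnorm (iota y - iota x) < e]) /\
  (forall h (e : R), 0 < e -> exists f, hnorm (h - iota f) < e) /\
  (forall h, Dx D (jH h)) /\
  (forall h (A : set (D -> C)), Dx_open D A -> A (jH h) ->
     exists2 e : R, 0 < e & forall h', hnorm (h' - h) < e -> A (jH h')) /\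
  (forall A : set (D -> C), Dx_open D A -> (exists F, A F) ->
     exists h, A (jH h)).

(** adjoint and graph of an operator with domain iota(dom) ⊂ H *)
Definition op_graph (dom : set D) (T : D -> H) : set (H * H) :=
  [set (iota f, T f) | f in dom].
Definition adjoint_graph (dom : set D) (T : D -> H) : set (H * H) :=
  [set gh | forall f, dom f -> ip (T f) gh.1 = ip (iota f) gh.2].
End Hilbert.

Section Multipliers.
Context (d : measure_display) (X : measurableType d) (mu : {measure set X -> \bar R}).

Definition cmeasurable (f : X -> C) :=
  measurable_fun setT (fun x => complex.Re (f x)) /\
  measurable_fun setT (fun x => complex.Im (f x)).

Definition cintegral (f : X -> C) : C :=
  (Rintegral mu setT (fun x => complex.Re (f x)) +i*
   Rintegral mu setT (fun x => complex.Im (f x)))%C.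

Definition Linfty (m : X -> C) :=
  cmeasurable m /\ exists K : R, \forall x \ae mu, cabs (m x) <= K.

Variable D : tvsType C.

(* Bessel distribution map omega : X -> D^x; <f, omega_x> = conj (omega_x f) *)
Definition bessel_map (om : X -> D -> C) :=
  (forall x, Dx D (om x)) /\
  forall f, cmeasurable (fun x => (om x f)^*) /\
    (\int[mu]_x (cnorm2 ((om x f)^*))%:E < +oo)%E.

(* outer multiplier: <M f, g> = \int m(x) <f,om_x> <th_x,g> dmu *)
Definition outer_mult (m : X -> C) (om th : X -> D -> C) (f : D) : D -> C :=
  fun g => cintegral (fun x => m x * (om x f)^* * th x g).

Variable H : lmodType C.
Variable ip : H -> H -> C.
Variable iota : D -> H.

(* h is the Riesz representative of M_out f *)
Definition mult_rel m om th (f : D) (h : H) :=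
  forall g, outer_mult m om th f g = ip h (iota g).

Definition mult_dom m om th : set D := [set f | exists h, mult_rel m om th f h].

Definition mult_op m om th (f : D) : H :=
  match pselect (exists h, mult_rel m om th f h) with
  | left e => projT1 (cid e)
  | right _ => 0
  end.
End Multipliers.
End RiggedDefs.
Arguments Dx {R} D.
Arguments Dx_open {R} D.
Arguments Dxx {R} D.
Arguments Dxx_open {R} D.

(* Main.v *)
Require Import Defs.
From mathcomp Require Import all_boot all_algebra all_classical all_reals all_analysis.
From mathcomp Require Import complex.
From mathcomp Require Import ring lra.
Import order.Order.TTheory GRing.Theory Num.Theory.
Local Open Scope classical_set_scope.
Local Open Scope ring_scope.

Section Cplx.
Context {R : realType}.
Lemma cReJ (z : R[i]) : complex.Re z^* = complex.Re z.
Proof. by case: z. Qed.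
Lemma cImJ (z : R[i]) : complex.Im z^* = - complex.Im z.
Proof. by case: z. Qed.
Lemma cReM (z w : R[i]) : complex.Re (z * w) = complex.Re z * complex.Re w - complex.Im z * complex.Im w.
Proof. by case: z; case: w. Qed.
Lemma cImM (z w : R[i]) : complex.Im (z * w) = complex.Re z * complex.Im w + complex.Im z * complex.Re w.
Proof. by case: z; case: w => a b c d /=. Qed.
Lemma cReD (z w : R[i]) : complex.Re (z + w) = complex.Re z + complex.Re w.
Proof. by case: z; case: w. Qed.
Lemma cImD (z w : R[i]) : complex.Im (z + w) = complex.Im z + complex.Im w.
Proof. by case: z; case: w. Qed.
Lemma cReN (z : R[i]) : complex.Re (- z) = - complex.Re z.
Proof. by case: z. Qed.
Lemma cImN (z : R[i]) : complex.Im (- z) = - complex.Im z.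
Proof. by case: z. Qed.
Lemma cReR (r : R) : complex.Re ((r%:C)%C) = r. Proof. by []. Qed.
Lemma cImR (r : R) : complex.Im ((r%:C)%C) = 0. Proof. by []. Qed.
Lemma cle0 (z : R[i]) : (0 <= z) = (complex.Im z == 0) && (0 <= complex.Re z).
Proof. by rewrite lecE /= eq_sym. Qed.
Lemma cRJ (r : R) : ((r%:C)%C)^* = (r%:C)%C.
Proof. by apply/eqP; rewrite eq_complex /= oppr0 !eqxx. Qed.
Lemma ceta (z : R[i]) : z = (complex.Re z +i* complex.Im z)%C.
Proof. by case: z. Qed.
Lemma cnorm2_ge0 (z : R[i]) : 0 <= cnorm2 z.
Proof. by rewrite /cnorm2 addr_ge0 // sqr_ge0. Qed.
Lemma cnorm2M (z w : R[i]) : cnorm2 (z * w) = cnorm2 z * cnorm2 w.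
Proof. rewrite /cnorm2 cReM cImM. case: z; case: w => a b c d /=. rewrite !expr2. ring. Qed.
Lemma cnorm2J (z : R[i]) : cnorm2 z^* = cnorm2 z.
Proof. by rewrite /cnorm2 cReJ cImJ sqrrN. Qed.
Lemma cabs_ge0 (z : R[i]) : 0 <= cabs z. Proof. exact: sqrtr_ge0. Qed.
Lemma cabsM (z w : R[i]) : cabs (z * w) = cabs z * cabs w.
Proof. by rewrite /cabs cnorm2M sqrtrM // cnorm2_ge0. Qed.
Lemma cabsJ (z : R[i]) : cabs z^* = cabs z.
Proof. by rewrite /cabs cnorm2J. Qed.
Lemma cabs_sqr (z : R[i]) : cabs z ^+ 2 = cnorm2 z.
Proof. by rewrite /cabs sqr_sqrtr // cnorm2_ge0. Qed.
Lemma cabs_Re (z : R[i]) : `|complex.Re z| <= cabs z.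
Proof.
rewrite /cabs -sqrtr_sqr ler_sqrt ?cnorm2_ge0 // /cnorm2 lerDl sqr_ge0 //.
Qed.
Lemma cabs_Im (z : R[i]) : `|complex.Im z| <= cabs z.
Proof.
rewrite /cabs -sqrtr_sqr ler_sqrt ?cnorm2_ge0 // /cnorm2 lerDr sqr_ge0 //.
Qed.
Lemma cabs_le (z : R[i]) : cabs z <= `|complex.Re z| + `|complex.Im z|.
Proof.
set a := complex.Re z; set b := complex.Im z.
have h0 : 0 <= `|a| + `|b| by rewrite addr_ge0.
rewrite -(ger0_norm h0) -sqrtr_sqr /cabs /cnorm2 -/a -/b.
rewrite ler_sqrt ?sqr_ge0 //.
have ha : a ^+ 2 = `|a| ^+ 2 by rewrite real_normK ?num_real.
have hb : b ^+ 2 = `|b| ^+ 2 by rewrite real_normK ?num_real.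
rewrite ha hb.
have := normr_ge0 a; have := normr_ge0 b.
move: (`|a|) (`|b|) => x y hx hy. rewrite !expr2. nra.
Qed.
Lemma two_mul_le (a b : R) : 2 * (a * b) <= a ^+ 2 + b ^+ 2.
Proof. have := sqr_ge0 (a - b). rewrite !expr2 => h. nra. Qed.
End Cplx.

Section Hil.
Context {R : realType} {H : lmodType R[i]} (ip : H -> H -> R[i]).
Context (hH : hilbert_space ip).

Definition hn2 (x : H) : R := complex.Re (ip x x).

Lemma ipDl a x y z : ip (a *: x + y) z = a * ip x z + ip y z.
Proof. by case: hH => h _; apply: h. Qed.
Lemma ipC x y : ip y x = (ip x y)^*.
Proof. by case: hH => _ [h _]; apply: h. Qed.
Lemma ip_ge0 x : 0 <= ip x x.
Proof. by case: hH => _ [_ [h _]]; apply: h. Qed.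
Lemma ip_eq0 x : ip x x = 0 -> x = 0.
Proof. by case: hH => _ [_ [_ [h _]]]; apply: h. Qed.

Lemma ipDr a x y z : ip z (a *: x + y) = a^* * ip z x + ip z y.
Proof. by rewrite ipC ipDl rmorphD rmorphM /= -!ipC. Qed.
Lemma ip0l z : ip 0 z = 0.
Proof.
have := ipDl (-1) z z z; rewrite scaleN1r addNr mulN1r addNr; exact.
Qed.
Lemma ip0r z : ip z 0 = 0.
Proof. by rewrite ipC ip0l conjC0. Qed.
Lemma ipZl a x z : ip (a *: x) z = a * ip x z.
Proof. by have := ipDl a x 0 z; rewrite addr0 ip0l addr0. Qed.
Lemma ipZr a x z : ip z (a *: x) = a^* * ip z x.
Proof. by have := ipDr a x 0 z; rewrite addr0 ip0r addr0. Qed.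
Lemma ipDl1 x y z : ip (x + y) z = ip x z + ip y z.
Proof. by have := ipDl 1 x y z; rewrite scale1r mul1r. Qed.
Lemma ipDr1 x y z : ip z (x + y) = ip z x + ip z y.
Proof. by have := ipDr 1 x y z; rewrite scale1r conjC1 mul1r. Qed.
Lemma ipNl x z : ip (- x) z = - ip x z.
Proof. by rewrite -scaleN1r ipZl mulN1r. Qed.
Lemma ipNr x z : ip z (- x) = - ip z x.
Proof. by rewrite -scaleN1r ipZr conjCN1 mulN1r. Qed.
Lemma ipBl x y z : ip (x - y) z = ip x z - ip y z.
Proof. by rewrite ipDl1 ipNl. Qed.
Lemma ipBr x y z : ip z (x - y) = ip z x - ip z y.
Proof. by rewrite ipDr1 ipNr. Qed.

Lemma ip_real x : ip x x = ((hn2 x)%:C)%C.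
Proof.
have := ip_ge0 x; rewrite cle0 => /andP[/eqP hi _].
by rewrite [LHS]ceta hi.
Qed.
Lemma hn2_ge0 x : 0 <= hn2 x.
Proof. by have := ip_ge0 x; rewrite cle0 => /andP[_ ->]. Qed.
Lemma hn2_eq0 x : hn2 x = 0 -> x = 0.
Proof. by move=> h; apply: ip_eq0; rewrite ip_real h. Qed.
Lemma hnormE x : hnorm ip x = Num.sqrt (hn2 x).
Proof. by []. Qed.
Lemma hnorm_lt x (e : R) : 0 < e -> (hnorm ip x < e) = (hn2 x < e ^+ 2).
Proof.
move=> e0; rewrite hnormE -(ltr_sqrt (hn2 x)) ?exprn_gt0 //.
by rewrite sqrtr_sqr gtr0_norm.
Qed.
Lemma hn2N x : hn2 (- x) = hn2 x.
Proof. by rewrite /hn2 ipNl ipNr opprK. Qed.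
Lemma hn2Z (c : R[i]) x : hn2 (c *: x) = cnorm2 c * hn2 x.
Proof.
rewrite /hn2 ipZl ipZr ip_real mulrA cReM cImR mulr0 subr0 /=.
congr (_ * _). rewrite cReM cImJ cReJ /cnorm2 !expr2. ring.
Qed.

Lemma re_ip_le x y (s : R) : 0 < s ->
  2 * complex.Re (ip x y) <= s * hn2 x + hn2 y / s.
Proof.
move=> s0.
have h := hn2_ge0 (((s%:C)%C) *: x - y).
have e : hn2 (((s%:C)%C) *: x - y) =
   s * s * hn2 x - 2 * s * complex.Re (ip x y) + hn2 y.
  rewrite /hn2 ipBl !ipBr !ipZl !ipZr cRJ [ip y x]ipC.
  rewrite !(cReD, cReN, cReM, cReJ, cImR, cReR) /= !mul0r !subr0 /hn2. ring.
rewrite e in h.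
rewrite -(ler_pM2l s0) mulrDr (_ : s * (hn2 y / s) = hn2 y); last first.
  by rewrite mulrCA divff ?mulr1 // gt_eqF.
rewrite !mulrA; lra.
Qed.

Lemma hn2D x y : hn2 (x + y) <= 2 * (hn2 x + hn2 y).
Proof.
have h := re_ip_le x y 1 ltr01.
have e : hn2 (x + y) = hn2 x + 2 * complex.Re (ip x y) + hn2 y.
  rewrite /hn2 ipDl1 !ipDr1 [ip y x]ipC !(cReD, cReJ). ring.
rewrite e; rewrite mul1r divr1 in h. have := hn2_ge0 x. have := hn2_ge0 y. lra.
Qed.

Lemma ortho0 (iota : (H -> Prop)) x :
  (forall e : R, 0 < e -> exists y, iota y /\ hn2 (x - y) < e) ->
  (forall y, iota y -> ip x y = 0) -> x = 0.
Proof.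
move=> hd ho; apply: hn2_eq0; apply/eqP; rewrite eq_le hn2_ge0 andbT.
apply/ler_addgt0Pr => e e0; rewrite add0r.
have [y [iy hy]] := hd e e0.
have h := re_ip_le x (x - y) 1 ltr01.
rewrite mul1r divr1 ipBr (ho y iy) subr0 -/(hn2 x) in h.
lra.
Qed.

Lemma abs_re_ip k z (s : R) : 0 < s ->
  2 * `|complex.Re (ip k z)| <= s * hn2 k + hn2 z / s.
Proof.
move=> s0; have h1 := re_ip_le k z s s0; have h2 := re_ip_le k (- z) s s0.
rewrite hn2N ipNr cReN in h2.
case: (lerP 0 (complex.Re (ip k z))) => h; [rewrite ger0_norm // | rewrite ltr0_norm //]; lra.
Qed.

Lemma abs_im_ip k z (s : R) : 0 < s ->
  2 * `|complex.Im (ip k z)| <= s * hn2 k + hn2 z / s.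
Proof.
move=> s0; have := abs_re_ip k (('i%C) *: z) s s0.
rewrite ipZr hn2Z cReM cReJ cImJ /cnorm2 /=.
rewrite mul0r sub0r mulN1r opprK expr0n /= add0r expr1n mul1r; exact.
Qed.

Lemma ip_cont k (e : R) : 0 < e -> exists2 d : R, 0 < d &
  forall z, hn2 z < d -> cabs (ip k z) < e.
Proof.
move=> e0.
have hk := hn2_ge0 k.
have hk1 : 0 < 2 * (hn2 k + 1) by lra.
set s := e / (2 * (hn2 k + 1)).
have s0 : 0 < s by rewrite divr_gt0.
exists (e * s / 2); first by rewrite divr_gt0 // mulr_gt0.
move=> z hz.
have hsk : s * hn2 k < e / 2.
  have -> : s * hn2 k = e * (hn2 k / (2 * (hn2 k + 1))) by rewrite /s mulrAC mulrA.
  have : hn2 k / (2 * (hn2 k + 1)) < 1 / 2.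
    rewrite ltr_pdivrMr //.
    have -> : 1 / 2 * (2 * (hn2 k + 1)) = hn2 k + 1 by field.
    lra.
  by move=> h; have := h; rewrite -(ltr_pM2l e0) mul1r.
have hzs : hn2 z / s < e / 2.
  by rewrite ltr_pdivrMr // mulrAC.
have hr := abs_re_ip k z s s0; have hi := abs_im_ip k z s s0.
have := cabs_le (ip k z). lra.
Qed.

End Hil.

Section Integ.
Context {R : realType} {d : measure_display} {X : measurableType d}
  (mu : {measure set X -> \bar R}).

Local Notation mfun := (measurable_fun (T:=X) (U:=Real_sort__canonical__measurable_structure_SigmaRing R) setT).

Definition L2c (u : X -> R[i]) :=
  cmeasurable u /\ (\int[mu]_x (cnorm2 (u x))%:E < +oo)%E.
Definition rint (f : X -> R) := mu.-integrable setT (EFin \o f).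

Lemma cmeasM {u v : X -> R[i]} : cmeasurable u -> cmeasurable v ->
  cmeasurable (fun x => u x * v x).
Proof.
move=> [ur ui] [vr vi]; split.
- have -> : (fun x => complex.Re (u x * v x)) =
      ((fun x => complex.Re (u x)) \* (fun x => complex.Re (v x))) \-
      ((fun x => complex.Im (u x)) \* (fun x => complex.Im (v x))).
    by apply: funext => x; rewrite cReM.
  by apply: measurable_realfun.measurable_funB; apply: measurable_realfun.measurable_funM.
- have -> : (fun x => complex.Im (u x * v x)) =
      ((fun x => complex.Re (u x)) \* (fun x => complex.Im (v x))) \+
      ((fun x => complex.Im (u x)) \* (fun x => complex.Re (v x))).
    by apply: funext => x; rewrite cImM.
  by apply: measurable_realfun.measurable_funD; apply: measurable_realfun.measurable_funM.
Qed.

Lemma cmeasJ {u : X -> R[i]} : cmeasurable u -> cmeasurable (fun x => (u x)^*).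
Proof.
move=> [ur ui]; split.
- by have -> : (fun x => complex.Re (u x)^*) = (fun x => complex.Re (u x))
    by apply: funext => x; rewrite cReJ.
- have -> : (fun x => complex.Im (u x)^*) = \- (fun x => complex.Im (u x))
    by apply: funext => x; rewrite cImJ.
  exact: measurable_realfun.measurable_funN.
Qed.

Lemma meas_cnorm2 {u : X -> R[i]} : cmeasurable u -> mfun (fun x => cnorm2 (u x)).
Proof.
move=> [ur ui]; rewrite /cnorm2.
have -> : (fun x => complex.Re (u x) ^+ 2 + complex.Im (u x) ^+ 2) =
   (fun x => complex.Re (u x) ^+ 2) \+ (fun x => complex.Im (u x) ^+ 2) by [].
by apply: measurable_realfun.measurable_funD; apply: measurable_realfun.measurable_funX.
Qed.

Lemma L2_int {u : X -> R[i]} : L2c u -> rint (fun x => cnorm2 (u x)).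
Proof.
move=> [mu' fin]; apply/integrableP; split.
  by apply/measurable_realfun.measurable_EFinP; exact: meas_cnorm2.
rewrite (eq_integral (fun x => (cnorm2 (u x))%:E)) //.
by move=> x _ /=; rewrite ger0_norm // cnorm2_ge0.
Qed.

Lemma rint_le (f g : X -> R) : mfun f -> rint g ->
  (\forall x \ae mu, `|f x| <= g x) -> rint f.
Proof.
move=> mf ig hae; apply/integrableP; split.
  exact/measurable_realfun.measurable_EFinP.
have /integrableP[mg fg] := ig.
refine (le_lt_trans _ fg).
apply: ae_ge0_le_integral => //.
- have -> : (fun x => `|(EFin \o f) x|%E) = EFin \o (fun x => `|f x|)
    by apply: funext => x.
  apply/measurable_realfun.measurable_EFinP.
  exact: measurableT_comp (@measurable_realfun.normr_measurable R setT) mf.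
- have -> : (fun x => `|(EFin \o g) x|%E) = EFin \o (fun x => `|g x|)
    by apply: funext => x.
  apply/measurable_realfun.measurable_EFinP.
  apply: measurableT_comp (@measurable_realfun.normr_measurable R setT) _.
  exact/measurable_realfun.measurable_EFinP.
- apply: filterS hae => x hx _ /=.
  rewrite lee_fin; apply: (le_trans hx); exact: ler_norm.
Qed.

Lemma rint_lin (a b : R) {f g : X -> R} : rint f -> rint g ->
  rint (fun x => a * f x + b * g x) /\
  Rintegral mu setT (fun x => a * f x + b * g x) =
    a * Rintegral mu setT f + b * Rintegral mu setT g.
Proof.
move=> fi gi.
have fi' : rint (fun x => a * f x).
  have := integrableZl measurableT a fi.
  by congr (_.-integrable _ _); apply: funext => x.
have gi' : rint (fun x => b * g x).
  have := integrableZl measurableT b gi.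
  by congr (_.-integrable _ _); apply: funext => x.
split.
  have := integrableD measurableT fi' gi'.
  by congr (_.-integrable _ _); apply: funext => x.
rewrite RintegralD //.
by rewrite RintegralZl // RintegralZl.
Qed.

Lemma prod_int (m u v : X -> R[i]) : Linfty mu m -> L2c u -> L2c v ->
  rint (fun x => complex.Re (m x * u x * v x)) /\
  rint (fun x => complex.Im (m x * u x * v x)).
Proof.
move=> [mm [K hK]] lu lv.
have [mr mi] := cmeasM (cmeasM mm lu.1) lv.1.
set K' := `|K|.
have iu := L2_int lu; have iv := L2_int lv.
have ig : rint (fun x => K' * cnorm2 (u x) + K' * cnorm2 (v x)).
  by have [] := rint_lin K' K' iu iv.
have hb : \forall x \ae mu, cabs (m x * u x * v x) <=
    K' * cnorm2 (u x) + K' * cnorm2 (v x).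
  apply: filterS hK => x hx.
  rewrite !cabsM -mulrA -mulrDr.
  have hK' : cabs (m x) <= K' by apply: (le_trans hx); exact: ler_norm.
  have h2 := two_mul_le (cabs (u x)) (cabs (v x)).
  rewrite !cabs_sqr in h2.
  have hu := cabs_ge0 (u x); have hv := cabs_ge0 (v x).
  have huv : cabs (u x) * cabs (v x) <= cnorm2 (u x) + cnorm2 (v x).
    have := cnorm2_ge0 (u x); have := cnorm2_ge0 (v x).
    have := mulr_ge0 hu hv. lra.
  apply: ler_pM => //; [exact: cabs_ge0 | exact: mulr_ge0].
split.
- apply: rint_le mr ig _; apply: filterS hb => x hx.
  exact: le_trans (cabs_Re _) hx.
- apply: rint_le mi ig _; apply: filterS hb => x hx.
  exact: le_trans (cabs_Im _) hx.
Qed.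

Definition cint_ok (h : X -> R[i]) :=
  rint (fun x => complex.Re (h x)) /\ rint (fun x => complex.Im (h x)).

Lemma cintegral_lin (a : R[i]) h1 h2 : cint_ok h1 -> cint_ok h2 ->
  cintegral mu (fun x => a * h1 x + h2 x) = a * cintegral mu h1 + cintegral mu h2.
Proof.
move=> [r1 i1] [r2 i2].
rewrite /cintegral.
have [ir1 er1] := rint_lin (complex.Re a) (- complex.Im a) r1 i1.
have [ii1 ei1] := rint_lin (complex.Re a) (complex.Im a) i1 r1.
have [_ er] := rint_lin 1 1 ir1 r2.
have [_ ei] := rint_lin 1 1 ii1 i2.
have eR : Rintegral mu setT (fun x => complex.Re (a * h1 x + h2 x)) =
    1 * (complex.Re a * Rintegral mu setT (fun x => complex.Re (h1 x)) +
         - complex.Im a * Rintegral mu setT (fun x => complex.Im (h1 x))) +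
    1 * Rintegral mu setT (fun x => complex.Re (h2 x)).
  rewrite -er1 -er; apply: eq_Rintegral => x _.
  by rewrite cReD cReM !mul1r mulNr.
have eI : Rintegral mu setT (fun x => complex.Im (a * h1 x + h2 x)) =
    1 * (complex.Re a * Rintegral mu setT (fun x => complex.Im (h1 x)) +
         complex.Im a * Rintegral mu setT (fun x => complex.Re (h1 x))) +
    1 * Rintegral mu setT (fun x => complex.Im (h2 x)).
  rewrite -ei1 -ei; apply: eq_Rintegral => x _.
  by rewrite cImD cImM !mul1r.
rewrite eR eI.
apply/eqP; rewrite eq_complex; apply/andP; split; apply/eqP;
  rewrite !(cReD, cImD, cReM, cImM) /=; ring.
Qed.

Lemma cintegralJ h : cint_ok h ->
  cintegral mu (fun x => (h x)^*) = (cintegral mu h)^*.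
Proof.
move=> [r1 i1]; rewrite /cintegral.
under eq_Rintegral do rewrite cReJ.
under [X in (_ +i* X)%C]eq_Rintegral do rewrite cImJ -mulN1r.
rewrite RintegralZl // mulN1r.
by apply/eqP; rewrite eq_complex /= !eqxx.
Qed.

End Integ.

Section Main.
Context {R : realType} {H : lmodType R[i]} (ip : H -> H -> R[i])
  {D : tvsType R[i]} (iota : D -> H)
  {d : measure_display} {X : measurableType d} (mu : {measure set X -> \bar R})
  (om th : X -> D -> R[i]) (m : X -> R[i]).
Context (hR : rigged_hilbert_space ip iota) (bo : bessel_map mu om)
  (bt : bessel_map mu th) (lm : Linfty mu m).

Local Notation OM := (outer_mult mu m om th).
Local Notation OM' := (outer_mult mu (fun x => (m x)^*) th om).

Let hH : hilbert_space ip := hR.1.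
Lemma iotaL a x y : iota (a *: x + y) = a *: iota x + iota y.
Proof. by case: hR => _ [h _]; apply: h. Qed.
Lemma iota0 : iota 0 = 0.
Proof. by have := iotaL (-1) 0 0; rewrite scaleN1r addNr scaleN1r addNr. Qed.
Lemma iotaZ a x : iota (a *: x) = a *: iota x.
Proof. by have := iotaL a x 0; rewrite !addr0 iota0 addr0. Qed.
Lemma iotaB x y : iota (x - y) = iota x - iota y.
Proof. by have := iotaL (-1) y x; rewrite !scaleN1r addrC => ->; rewrite addrC. Qed.
Lemma jH_Dx h : Dx D (jH ip iota h).
Proof. by case: hR => _ [_ [_ [_ [_ [h' _]]]]]; apply: h'. Qed.

Lemma hn2_0 : hn2 ip 0 = 0.
Proof. by rewrite /hn2 (ip0l ip hH). Qed.

Lemma dens2 h (e : R) : 0 < e -> exists f, hn2 ip (h - iota f) < e.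
Proof.
move=> e0; case: hR => _ [_ [_ [_ [hd _]]]].
have [f hf] := hd h (Num.sqrt e) (ltac:(by rewrite sqrtr_gt0)).
exists f; move: hf; rewrite (hnorm_lt ip) ?sqrtr_gt0 // sqr_sqrtr //; exact: ltW.
Qed.

Lemma conjlin {phi : D -> R[i]} : Dx D phi ->
  forall a x y, phi (a *: x + y) = a^* * phi x + phi y.
Proof. by case=> h _ a x y; apply: h. Qed.

Lemma L2_om f : L2c mu (fun x => (om x f)^*).
Proof. by case: bo => _ /(_ f) []. Qed.
Lemma L2_th g : L2c mu (fun x => th x g).
Proof.
case: bt => _ /(_ g) [hm hi]; split.
  have := cmeasJ hm.
  by have -> : (fun x => (th x g)^*^*) = (fun x => th x g)
    by apply: funext => x; rewrite conjCK.
by under eq_integral do rewrite -cnorm2J.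
Qed.
Lemma ok f g : cint_ok mu (fun x => m x * (om x f)^* * th x g).
Proof. exact: prod_int lm (L2_om f) (L2_th g). Qed.

Lemma OM_lin a f f' g : OM (a *: f + f') g = a * OM f g + OM f' g.
Proof.
rewrite /outer_mult -(cintegral_lin mu a _ _ (ok f g) (ok f' g)); congr cintegral; apply: funext => x.
rewrite (conjlin (bo.1 x)) rmorphD rmorphM /= conjCK. ring.
Qed.

Lemma OM'_conj f g : OM' g f = (OM f g)^*.
Proof.
rewrite /outer_mult -(cintegralJ mu _ (ok f g)); congr cintegral; apply: funext => x.
rewrite !rmorphM /= conjCK. ring.
Qed.

Lemma OM0 g : OM 0 g = 0.
Proof. by have := OM_lin (-1) 0 0 g; rewrite scaleN1r oppr0 addr0 mulN1r addNr. Qed.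

Context (hDx : forall f, Dx D (OM f))
  (huniq : forall F, Dx D F -> exists! f, OM f = F)
  (Minv : (D -> R[i]) -> D)
  (hM1 : forall F, Dx D F -> OM (Minv F) = F)
  (hM2 : forall U : set D, open U -> Dx_open D [set F | Dx D F /\ U (Minv F)]).

Lemma OM_inj f g : OM f = OM g -> f = g.
Proof.
move=> e; have [f0 [_ u]] := huniq _ (hDx f).
by rewrite -(u f erefl) -(u g (esym e)).
Qed.
Lemma MinvK f : Minv (OM f) = f.
Proof. by apply: OM_inj; rewrite hM1. Qed.

Definition rel := mult_rel mu ip iota m om th.
Lemma relE f h : rel f h <-> OM f = jH ip iota h.
Proof.
split=> [r|e g]; first by apply: funext => g; rewrite r.
by rewrite e.
Qed.

Lemma rel_uniq (m' : X -> R[i]) (om' th' : X -> D -> R[i]) f h1 h2 :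
  mult_rel mu ip iota m' om' th' f h1 -> mult_rel mu ip iota m' om' th' f h2 -> h1 = h2.
Proof.
move=> r1 r2; apply/eqP; rewrite -subr_eq0; apply/eqP.
apply: (ortho0 ip hH (range iota)).
  move=> e e0; have [f0 hf] := dens2 (h1 - h2) e e0.
  by exists (iota f0); split => //; exists f0.
by move=> _ [g _ <-]; rewrite (ipBl ip hH) -r1 -r2 subrr.
Qed.

Lemma M_spec (m' : X -> R[i]) (om' th' : X -> D -> R[i]) f h :
  mult_rel mu ip iota m' om' th' f h -> mult_op mu ip iota m' om' th' f = h.
Proof.
move=> r; rewrite /mult_op; case: pselect => [e|[]]; last by exists h.
by case: cid => h' r' /=; apply: rel_uniq r' r.
Qed.

Lemma M_rel (m' : X -> R[i]) (om' th' : X -> D -> R[i]) f :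
  mult_dom mu ip iota m' om' th' f ->
  mult_rel mu ip iota m' om' th' f (mult_op mu ip iota m' om' th' f).
Proof.
move=> hd; rewrite /mult_op; case: pselect => [e|//].
by case: cid.
Qed.

Lemma rel_Minv h : rel (Minv (jH ip iota h)) h.
Proof. by apply/relE; apply: hM1; apply: jH_Dx. Qed.


Local Notation dom := (mult_dom mu ip iota m om th).
Local Notation M := (mult_op mu ip iota m om th).

Lemma nb_open x0 (e : R) : 0 < e -> exists U : set D,
  [/\ open U, U x0 & forall y, U y -> hn2 ip (iota y - iota x0) < e].
Proof.
move=> e0; case: hR => _ [_ [_ [hnb _]]].
have := hnb x0 (Num.sqrt e) (ltac:(by rewrite sqrtr_gt0)).
rewrite nbhsE => -[B [oB Bx] sB]; exists B; split => // y /sB /=.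
by rewrite (hnorm_lt ip) ?sqrtr_gt0 // sqr_sqrtr // ltW.
Qed.

Lemma jH_cont h A : Dx_open D A -> A (jH ip iota h) ->
  exists2 e : R, 0 < e & forall h', hn2 ip (h' - h) < e -> A (jH ip iota h').
Proof.
case: hR => _ [_ [_ [_ [_ [_ [hc _]]]]]] oA Ah.
have [e e0 he] := hc h A oA Ah.
exists (e ^+ 2); first by rewrite exprn_gt0.
by move=> h' hh; apply: he; rewrite (hnorm_lt ip).
Qed.

Lemma jH_OM0 : jH ip iota 0 = OM 0.
Proof. by apply: funext => g; rewrite /jH (ip0l ip hH) OM0. Qed.
Lemma Minv_jH0 : Minv (jH ip iota 0) = 0.
Proof. by rewrite jH_OM0 MinvK. Qed.

Lemma OMZ (c : R[i]) h f : OM f = jH ip iota h -> OM (c *: f) = jH ip iota (c *: h).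
Proof.
move=> e; apply: funext => g.
by rewrite -[c *: f]addr0 OM_lin OM0 addr0 e /jH (ipZl ip hH).
Qed.

Lemma cnorm2R (c : R) : cnorm2 ((c%:C)%C) = c ^+ 2.
Proof. by rewrite /cnorm2 /= expr0n addr0. Qed.

Lemma bound : exists2 C : R, 0 < C &
  forall f h, rel f h -> hn2 ip (iota f) <= C * hn2 ip h.
Proof.
have [U0 [oU U00 hU]] := nb_open 0 1 ltr01.
have oA := hM2 _ oU.
have A0 : [set F | Dx D F /\ U0 (Minv F)] (jH ip iota 0).
  by split; [exact: jH_Dx | rewrite Minv_jH0].
have [de de0 hde] := jH_cont _ _ oA A0.
exists (2 / de); first by rewrite divr_gt0.
move=> f h r.
have hh0 := hn2_ge0 ip hH h.
case: (eqVneq (hn2 ip h) 0) => [h0|hn0].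
  have eh : h = 0 := hn2_eq0 ip hH h h0.
  have ef : f = 0.
    by apply: OM_inj; move/relE: r => ->; rewrite eh jH_OM0.
  by rewrite ef iota0 hn2_0 h0 mulr0.
have hp : 0 < hn2 ip h by rewrite lt_def hn0.
set t := de / (2 * hn2 ip h).
have t0 : 0 < t by rewrite divr_gt0 // mulr_gt0.
set c := Num.sqrt t.
have ct : c ^+ 2 = t by rewrite sqr_sqrtr // ltW.
have hlt : hn2 ip ((c%:C)%C *: h - 0) < de.
  rewrite subr0 (hn2Z ip hH) cnorm2R ct.
  have e2 : t * hn2 ip h = de / 2.
    rewrite /t; field; exact: hn0.
  rewrite e2; lra.
have [_ Uc] := hde _ hlt.
move: Uc; rewrite -(OMZ _ _ _ (proj1 (relE _ _) r)) MinvK => /hU.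
rewrite iota0 subr0 iotaZ (hn2Z ip hH) cnorm2R ct => h1.
have e1 : t * (2 / de * hn2 ip h) = 1.
  rewrite /t; field; apply/andP; split; [exact: lt0r_neq0 | exact: hn0].
rewrite -(ler_pM2l t0) e1; exact: ltW.
Qed.

Lemma M_dense h (e : R) : 0 < e -> exists2 f, dom f & hnorm ip (h - iota f) < e.
Proof.
move=> e0; rewrite -/(hnorm ip _).
set E := e ^+ 2.
have E0 : 0 < E by rewrite exprn_gt0.
have E4 : 0 < E / 4 by rewrite divr_gt0.
have [f0 hf0] := dens2 h _ E4.
have [U [oU Uf0 hU]] := nb_open f0 _ E4.
have oA := hM2 _ oU.
have AF : [set F | Dx D F /\ U (Minv F)] (OM f0) by split; [exact: hDx | rewrite MinvK].
case: hR => _ [_ [_ [_ [_ [_ [_ hHd]]]]]].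
have [h1 [_ Uh1]] := hHd _ oA (ex_intro _ _ AF).
exists (Minv (jH ip iota h1)); first by exists h1; exact: rel_Minv.
rewrite (hnorm_lt ip) // -/E.
have := hU _ Uh1.
set f1 := Minv _ => hf1.
have e1 : h - iota f1 = (h - iota f0) + - (iota f1 - iota f0).
  by rewrite opprB addrA subrK.
rewrite e1; apply: le_lt_trans (hn2D ip hH _ _) _.
rewrite (hn2N ip hH); lra.
Qed.

Lemma conv2 (x : nat -> H) :
  (forall e : R, 0 < e -> exists N, forall n, (N <= n)%N -> hnorm ip (x n) < e) ->
  forall e : R, 0 < e -> exists N, forall n, (N <= n)%N -> hn2 ip (x n) < e.
Proof.
move=> hc e e0; have [N hN] := hc (Num.sqrt e) (ltac:(by rewrite sqrtr_gt0)).
exists N => n /hN; rewrite (hnorm_lt ip) ?sqrtr_gt0 // sqr_sqrtr //; exact: ltW.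
Qed.

Lemma M_closed (u : nat -> D) (a b : H) : (forall n, dom (u n)) ->
  (forall e : R, 0 < e -> exists N, forall n, (N <= n)%N -> hnorm ip (iota (u n) - a) < e) ->
  (forall e : R, 0 < e -> exists N, forall n, (N <= n)%N -> hnorm ip (M (u n) - b) < e) ->
  exists2 f, dom f & iota f = a /\ M f = b.
Proof.
move=> hu c1 c2.
have rf := rel_Minv b.
set f := Minv _ in rf.
exists f; first by exists b.
split; last exact: (M_spec _ _ _ _ _ rf).
apply/eqP; rewrite -subr_eq0; apply/eqP; apply: (hn2_eq0 ip hH).
apply/eqP; rewrite eq_le (hn2_ge0 ip hH) andbT.
apply/ler_addgt0Pr => ep ep0; rewrite add0r.
have [C C0 hC] := bound.
have ep1 : 0 < ep / (4 * C) by rewrite divr_gt0 // mulr_gt0.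
have ep4 : 0 < ep / 4 by rewrite divr_gt0.
have [N1 hN1] := conv2 _ c2 _ ep1.
have [N2 hN2] := conv2 _ c1 _ ep4.
set n := maxn N1 N2.
have h1 := hN1 n (leq_maxl _ _); have h2 := hN2 n (leq_maxr _ _).
have rn := M_rel _ _ _ _ (hu n).
have r' : rel ((-1) *: u n + f) (b - M (u n)).
  move=> g; rewrite OM_lin rn rf (ipBl ip hH) mulN1r addrC.
  by [].
have hb := hC _ _ r'.
have hb' : hn2 ip (iota f - iota (u n)) <= C * hn2 ip (M (u n) - b).
  have e3 : iota ((-1) *: u n + f) = iota f - iota (u n)
    by rewrite iotaL scaleN1r addrC.
  have e4 : b - M (u n) = - (M (u n) - b) by rewrite opprB.
  by rewrite -e3 -(hn2N ip hH (M (u n) - b)) -e4.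
have e1 : iota f - a = (iota f - iota (u n)) + (iota (u n) - a).
  by rewrite addrA subrK.
rewrite e1; apply: le_trans (hn2D ip hH _ _) _.
have hC1 : C * hn2 ip (M (u n) - b) <= C * (ep / (4 * C)).
  by rewrite ler_pM2l // ltW.
have eC : C * (ep / (4 * C)) = ep / 4.
  by field; exact: lt0r_neq0.
rewrite eC in hC1.
lra.
Qed.

Context (hrefl : reflexive_space D).

Local Notation dom' := (mult_dom mu ip iota (fun x => (m x)^*) th om).
Local Notation M' := (mult_op mu ip iota (fun x => (m x)^*) th om).

Lemma adj_eq : adjoint_graph ip iota dom M = op_graph iota dom' M'.
Proof.
apply/seteqP; split.
- move=> [g k] /= hgk.
  pose Psi (F : D -> R[i]) := if `[< Dx D F >] then ip k (iota (Minv F)) else 0.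
  have hPsi : Dxx D Psi.
    split; [|split].
    + move=> a F G hF hG.
      have eFG : a *: F + G = OM (a *: Minv F + Minv G).
        by apply: funext => g0; rewrite OM_lin !hM1.
      by rewrite /Psi eFG !asboolT ?hDx // MinvK iotaL (ipDr ip hH).
    + move=> F hF e e0.
      have [de de0 hde] := ip_cont ip hH k e e0.
      have [U [oU UF hU]] := nb_open (Minv F) _ de0.
      exists [set G | Dx D G /\ U (Minv G)]; split; first exact: hM2.
      split; first by split.
      move=> G [hG UG] _; rewrite /Psi !asboolT // -(ipBr ip hH).
      exact: hde _ (hU _ UG).
    + by move=> F hF; rewrite /Psi asboolF.
  case: hrefl => _ [_ [hsurj _]].
  have [f' ef'] := hsurj _ hPsi.
  have key : forall f, (OM f f')^* = ip k (iota f).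
    move=> f; have := congr1 (fun P => P (OM f)) ef'.
    by rewrite /Jcan /Psi /= !asboolT ?hDx // MinvK.
  have rel' : mult_rel mu ip iota (fun x => (m x)^*) th om f' k.
    by move=> f; rewrite OM'_conj key.
  have eg : g = iota f'.
    apply/eqP; rewrite -subr_eq0; apply/eqP.
    have ho : forall h, ip h (g - iota f') = 0.
      move=> h; have r := rel_Minv h.
      set f := Minv _ in r.
      have hd : dom f by exists h.
      have e1 := hgk f hd.
      rewrite (M_spec _ _ _ _ _ r) in e1.
      rewrite (ipBr ip hH) e1 /= -r -[OM f f']conjCK key -(ipC ip hH) subrr //.
    by apply: (ip_eq0 ip hH); apply: ho.
  exists f'; first by exists k.
  by rewrite eg (M_spec _ _ _ _ _ rel').
- move=> _ [f' hf' <-] f hf /=.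
  have rf := M_rel _ _ _ _ hf.
  have rf' := M_rel _ _ _ _ hf'.
  rewrite -rf -[OM f f']conjCK -OM'_conj rf' -(ipC ip hH) //.
Qed.

Lemma main_all :
  ((forall f g, dom f -> dom g -> M f = M g -> f = g) /\
   (forall h, exists2 f, dom f & M f = h) /\
   (forall h (e : R), 0 < e -> exists2 f, dom f & hnorm ip (h - iota f) < e) /\
   (exists K : R, forall f, dom f -> hnorm ip (iota f) <= K * hnorm ip (M f)) /\
   (forall (u : nat -> D) (a b : H), (forall n, dom (u n)) ->
      (forall e : R, 0 < e -> exists N, forall n, (N <= n)%N -> hnorm ip (iota (u n) - a) < e) ->
      (forall e : R, 0 < e -> exists N, forall n, (N <= n)%N -> hnorm ip (M (u n) - b) < e) ->
      exists2 f, dom f & iota f = a /\ M f = b)) /\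
  adjoint_graph ip iota dom M = op_graph iota dom' M'.
Proof.
split; last exact: adj_eq.
split.
  move=> f g hf hg e; apply: OM_inj.
  rewrite (proj1 (relE _ _) (M_rel _ _ _ _ hf)) (proj1 (relE _ _) (M_rel _ _ _ _ hg)).
  by rewrite e.
split.
  move=> h; exists (Minv (jH ip iota h)); first by exists h; exact: rel_Minv.
  exact: (M_spec _ _ _ _ _ (rel_Minv h)).
split; first exact: M_dense.
split; last exact: M_closed.
have [C C0 hC] := bound.
exists (Num.sqrt C) => f hf.
have := hC _ _ (M_rel _ _ _ _ hf).
rewrite !hnormE -sqrtrM; last exact: ltW.
exact: ler_wsqrtr.
Qed.

End Main.
Theorem proposition4p1 (R : realType) (H : lmodType R[i]) (ip : H -> H -> R[i])
  (D : tvsType R[i]) (iota : D -> H)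
  (d : measure_display) (X : measurableType d) (mu : {measure set X -> \bar R})
  (om th : X -> D -> R[i]) (m : X -> R[i]) :
  rigged_hilbert_space ip iota ->
  frechet_space D -> reflexive_space D ->
  sigma_finite setT mu ->
  bessel_map mu om -> bessel_map mu th -> Linfty mu m ->
  (* M_out : D -> D^x is a bijection ... *)
  (forall f, Dx D (outer_mult mu m om th f)) ->
  (forall F, Dx D F -> exists! f, outer_mult mu m om th f = F) ->
  (* ... with continuous inverse D^x[t^x] -> D[t] *)
  (exists Minv : (D -> R[i]) -> D,
     (forall F, Dx D F -> outer_mult mu m om th (Minv F) = F) /\
     (forall U : set D, open U -> Dx_open D [set F | Dx D F /\ U (Minv F)])) ->
  let dom := mult_dom mu ip iota m om th in
  let M := mult_op mu ip iota m om th in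
  (* (i) *)
  ((forall f g, dom f -> dom g -> M f = M g -> f = g) /\
   (forall h, exists2 f, dom f & M f = h) /\
   (forall h (e : R), 0 < e -> exists2 f, dom f & hnorm ip (h - iota f) < e) /\
   (exists K : R, forall f, dom f -> hnorm ip (iota f) <= K * hnorm ip (M f)) /\
   (forall (u : nat -> D) (a b : H), (forall n, dom (u n)) ->
      (forall e : R, 0 < e -> exists N, forall n, (N <= n)%N -> hnorm ip (iota (u n) - a) < e) ->
      (forall e : R, 0 < e -> exists N, forall n, (N <= n)%N -> hnorm ip (M (u n) - b) < e) ->
      exists2 f, dom f & iota f = a /\ M f = b)) /\
  (* (ii) (M_{m,om,th})^* = M_{conj m, th, om} *)
  adjoint_graph ip iota dom M =
    op_graph iota (mult_dom mu ip iota (fun x => (m x)^*) th om)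
                  (mult_op mu ip iota (fun x => (m x)^*) th om).
Proof.
move=> hR _ hrefl _ bo bt lm hDx huniq [Minv [hM1 hM2]] dom M.
exact: (main_all ip iota mu om th m hR bo bt lm hDx huniq Minv hM1 hM2 hrefl).
Qed.
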